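(* Let $X$ be a topological space (no separation axioms assumed) that is both locally $\mathfrak{c}$ and $\mathfrak{c}$-fair, and let $\kappa\le\mathfrak{c}$ be a regular cardinal such that for every strongly increasing $\kappa$-sequence $\{F_\alpha:\alpha<\kappa\}$ of closed subsets of $X$ the union $\bigcup_{\alpha<\kappa}F_\alpha$ is closed in $X$. If $|X|>\mathfrak{c}$, then for every subset $A\subseteq X$ with $|A|\le\mathfrak{c}$ there exists a clopen subset $U$ of $X$ with $A\subseteq U$, $|U|=\mathfrak{c}$ and $L(U)\ge\kappa$.
   Context: A space $X$ is locally $\mathfrak{c}$ if every point has a neighbourhood of cardinality $\le\mathfrak{c}$. $X$ is $\mathfrak{c}$-fair if the closure of every subset of $X$ of cardinality $\mathfrak{c}$ also has cardinality $\mathfrak{c}$. A $\kappa$-sequence $\{F_\alpha:\alpha<\kappa\}$ of subsets of $X$ is strongly increasing if $F_\alpha\subseteq \operatorname{int}F_{\alpha+1}$ for all $\alpha<\kappa$. $L(U)$ denotes the Lindelöf number of $U$ (the least infinite cardinal $\lambda$ such that every open cover of $U$ has a subcover of size $\le\lambda$). *)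

(* Defs.v *)
From HB Require Import structures.
From mathcomp Require Import all_boot all_order all_algebra.
From mathcomp Require Import all_classical all_reals topology.
Set Implicit Arguments. Unset Strict Implicit. Unset Printing Implicit Defensive.
Local Open Scope classical_set_scope.
Local Open Scope card_scope.

(* The continuum c is represented by the cardinality of the power set of nat. *)
Definition continuum : set (set nat) := [set: set nat].

Definition card_lt (T U : Type) (A : set T) (B : set U) : Prop :=
  (A #<= B) /\ ~ (B #<= A).

Definition locally_c (X : topologicalType) : Prop :=
  forall x : X, exists N : set X, nbhs x N /\ (N #<= continuum).

Definition c_fair (X : topologicalType) : Prop :=
  forall A : set X, (A #= continuum) -> (closure A #= continuum).

(* A regular (infinite) cardinal kappa, presented as a well-ordered type (K, lt)
   of order type kappa (an initial ordinal). *)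
Definition regular_cardinal (K : Type) (lt : K -> K -> Prop) : Prop :=
  (forall a, ~ lt a a) /\
  (forall a b c, lt a b -> lt b c -> lt a c) /\
  (forall a b, a = b \/ lt a b \/ lt b a) /\
  well_founded lt /\
  (* initial ordinal: every proper initial segment has smaller cardinality *)
  (forall a, card_lt [set b | lt b a] [set: K]) /\
  infinite_set [set: K] /\
  (* regular: every cofinal (unbounded) subset has full cardinality *)
  (forall S : set K, (forall a, exists2 b, S b & ~ lt b a) -> (S #= [set: K])).

Definition is_succ (K : Type) (lt : K -> K -> Prop) (a b : K) : Prop :=
  lt a b /\ (forall c, lt a c -> ~ lt c b).

Definition strongly_increasing (X : topologicalType) (K : Type)
    (lt : K -> K -> Prop) (F : K -> set X) : Prop :=
  forall a b, is_succ lt a b -> F a `<=` interior (F b).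

Definition lindelof_le (X : topologicalType) (U : set X) (I : Type) (S : set I) : Prop :=
  forall C : set (set X), (forall V, C V -> open V) -> U `<=` \bigcup_(V in C) V ->
  exists2 D : set (set X), D `<=` C /\ U `<=` \bigcup_(V in D) V & D #<= S.

(* L(U) >= kappa: no infinite cardinal lambda < kappa (every such lambda is the
   cardinality of a subset of K) bounds the Lindelof number of U. *)
Definition lindelof_ge (X : topologicalType) (U : set X) (K : Type) : Prop :=
  forall S : set K, infinite_set S -> card_lt S [set: K] -> ~ lindelof_le U S.

(* Main.v *)
Require Import Defs.
From HB Require Import structures.
From mathcomp Require Import all_boot all_order all_algebra.
From mathcomp Require Import all_classical all_reals topology.
Local Open Scope classical_set_scope.
Local Open Scope card_scope.

Definition npair (S T : set nat) : set nat :=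
  [set n | if odd n then T n./2 else S n./2].

Lemma npair_inj S T S' T' : npair S T = npair S' T' -> S = S' /\ T = T'.
Proof.
move=> e; split; apply/funext => n; apply/propext.
- have := congr1 (fun P => P (n.*2)) e; rewrite /npair /= odd_double doubleK => ->.
  by [].
- have := congr1 (fun P => P (n.*2.+1)) e.
  rewrite /npair /= odd_double /= uphalf_double => ->; by [].
Qed.

Lemma le_c_fun T (A : set T) :
  A #<= [set: set nat] <-> exists f : T -> set nat, forall x y, A x -> A y -> f x = f y -> x = y.
Proof.
split.
- move=> /pcard_injP[f hf]; exists f => x y Ax Ay; apply: hf; by rewrite inE.
- move=> [f hf]; apply/pcard_injP; exists f => x y; rewrite !inE; exact: hf.
Qed.

Lemma bigcup_le_c I T (B : set I) (N : I -> set T) :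
  B #<= [set: set nat] -> (forall i, B i -> N i #<= [set: set nat]) ->
  \bigcup_(i in B) N i #<= [set: set nat].
Proof.
move=> /le_c_fun[fB hB] hN.
have [[i0 Bi0]|nB] := pselect (exists i, B i); last first.
  have -> : \bigcup_(i in B) N i = set0.
    by apply/seteqP; split => // y [i Bi _]; case: nB; exists i.
  exact: card_ge0.
have /choice[fN hfN] : forall i, exists f : T -> set nat, B i ->
     forall x y, N i x -> N i y -> f x = f y -> x = y.
  move=> i; have [Bi|nBi] := pselect (B i).
    by have /le_c_fun[f hf] := hN i Bi; exists f.
  by exists (fun _ => set0).
have /choice[iy hiy] : forall y, exists i, (\bigcup_(i in B) N i) y -> B i /\ N i y.
  move=> y; have [[i Bi Niy]|ny] := pselect ((\bigcup_(i in B) N i) y).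
    by exists i.
  by exists i0.
apply/le_c_fun; exists (fun y => npair (fB (iy y)) (fN (iy y) y)).
move=> x y hx hy /npair_inj[e1 e2].
have [Bx Nx] := hiy x hx; have [By Ny] := hiy y hy.
have ei := hB _ _ Bx By e1.
rewrite ei in Nx e2 Bx.
exact: (hfN _ Bx _ _ Nx Ny e2).
Qed.

Lemma setU_le_c T (A1 A2 : set T) :
  A1 #<= [set: set nat] -> A2 #<= [set: set nat] -> A1 `|` A2 #<= [set: set nat].
Proof.
move=> h1 h2.
have sub : A1 `|` A2 `<=` \bigcup_(i in [set: bool]) (if i then A1 else A2).
  by move=> y [h|h]; [exists true|exists false].
apply: card_le_trans (subset_card_le sub) _.
apply: bigcup_le_c; last by case.
apply/le_c_fun; exists (fun b : bool => if b then [set: nat] else set0).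
move=> [] [] _ _ //= e.
  by have := congr1 (fun P => P 0%N) e => /= h; exfalso; rewrite -h.
by have := congr1 (fun P => P 0%N) e => /= h; exfalso; rewrite h.
Qed.

Lemma set1_le_c T (x : T) : [set x] #<= [set: set nat].
Proof. apply/le_c_fun; exists (fun _ => set0) => a b -> ->. by []. Qed.

Theorem theorem4p2 (X : topologicalType) (K : Type) (lt : K -> K -> Prop) :
  locally_c X -> c_fair X ->
  regular_cardinal lt ->
  ([set: K] #<= continuum) ->
  (forall F : K -> set X, (forall a, closed (F a)) -> strongly_increasing lt F ->
     closed (\bigcup_(a in [set: K]) F a)) ->
  card_lt continuum [set: X] ->
  forall A : set X, (A #<= continuum) ->
  exists U : set X,
    [/\ open U, closed U, A `<=` U, (U #= continuum) & lindelof_ge U K].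
Proof.
rewrite /locally_c /c_fair /continuum /card_lt.
move=> hloc hfair [irr [tr [tri [wf [init [inf reg]]]]]] hK hU [hX1 hX2] A hA.
have /choice[N hN] := hloc.
have /pcard_surjP[g hg] := hX1.
have /choice[h hh] : forall S : set nat, exists x : X, g x = S.
  by move=> S; have [x _ <-] := hg S I; exists x.
pose C0 := h @` [set: set nat].
have C0c : C0 #= [set: set nat].
  apply: inj_card_eq => S T _ _ e; by rewrite -(hh S) -(hh T) e.
pose x0 := h set0.
have /choice[pt hpt] : forall B : set X, exists p, (exists q, ~ B q) -> ~ B p.
  move=> B; have [[q nq]|nq] := pselect (exists q, ~ B q); first by exists q.
  by exists x0.
pose Phi (B : set X) := closure (\bigcup_(x in B) N x `|` C0 `|` [set pt B]).
have P1 : forall B, B `<=` interior (Phi B).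
  move=> B x Bx; apply: filterS (hN x).1 => y Ny.
  by apply: subset_closure; left; left; exists x.
have P2 : forall B, B #<= [set: set nat] -> Phi B #= [set: set nat].
  move=> B hB; apply: hfair; apply: Cantor_Bernstein.
    apply: setU_le_c; last exact: set1_le_c.
    apply: setU_le_c; last by move/card_eqPle: C0c => [].
    apply: bigcup_le_c => // x _; exact: (hN x).2.
  have /card_eqPle[_ C0le] := C0c.
  apply: card_le_trans C0le _.
  by apply: subset_card_le => y Cy; left; right.
have P3 : forall B, B #<= [set: set nat] -> ~ B (pt B).
  move=> B hB; apply: hpt; apply: contrapT => nq; apply: hX2.
  apply: card_le_trans _ hB; apply: subset_card_le => q _.
  by apply: contrapT => nBq; apply: nq; exists q.
have P4 : forall B, Phi B (pt B).
  by move=> B; apply: subset_closure; right.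
pose F := Fix wf (fun _ => set X)
  (fun a rec => Phi (A `|` [set x | exists b (hb : lt b a), rec b hb x])).
have FE : forall a, F a = Phi (A `|` [set x | exists b, lt b a /\ F b x]).
  move=> a; rewrite /F Fix_eq.
    congr (Phi (A `|` _)); apply/funext => y; apply/propext.
    by split => [[b [hb hy]]|[b [hb hy]]]; exists b; [split|exists hb].
  move=> x f f' e; congr (Phi (A `|` _)); apply/funext => y; apply/propext.
  by split => [[b [hb hy]]|[b [hb hy]]]; exists b, hb; rewrite ?e // -e.
pose Bs a := A `|` [set x | exists b, lt b a /\ F b x].
have Fc : forall a, F a #= [set: set nat] /\ Bs a #<= [set: set nat].
  apply: (well_founded_ind wf) => a IH.
  have hB : Bs a #<= [set: set nat].
    apply: setU_le_c => //.
    have sub : [set x | exists b, lt b a /\ F b x] `<=` \bigcup_(b in [set b | lt b a]) F b.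
      by move=> y [b [hb hy]]; exists b.
    apply: card_le_trans (subset_card_le sub) _.
    apply: bigcup_le_c; first exact: card_le_trans (card_leT _) hK.
    by move=> b hb; have [/card_eqPle[]] := IH b hb.
  by split => //; rewrite FE; apply: P2.
have Fsub : forall b a, lt b a -> F b `<=` interior (F a).
  move=> b a hba; rewrite (FE a); apply: subset_trans (P1 _).
  by move=> y Fy; right; exists b.
have no_max : forall a, exists b, lt a b.
  move=> a; apply: contrapT => nb; apply: inf.
  have /eq_finite_set <- : [set a] #= [set: K]; last exact: finite_set1.
  apply: reg => c; exists a => // hac; apply: nb; by exists c.
have [k0 _] := infinite_setN0 inf.
pose U := \bigcup_(a in [set: K]) F a.
exists U; split.
- rewrite openE => x [a _ Fax]; have [b lab] := no_max a.
  have hint := Fsub a b lab x Fax.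
  by apply: filterS hint => y Fy; exists b.
- apply: hU => [a|a b [lab _]]; last exact: Fsub.
  by rewrite FE; exact: closed_closure.
- move=> x Ax; exists k0 => //; rewrite FE.
  by apply: interior_subset; apply: P1; left.
- apply: Cantor_Bernstein.
    by apply: bigcup_le_c => // a _; have [/card_eqPle[]] := Fc a.
  have [/card_eqPle[_ h1] _] := Fc k0.
  by apply: card_le_trans h1 _; apply: subset_card_le => y Fy; exists k0.
- move=> S _ [_ hSK] hL.
  have Copen : forall V, [set V | exists b, V = interior (F b)] V -> open V.
    by move=> V [b ->]; exact: open_interior.
  have Ccov : U `<=` \bigcup_(V in [set V | exists b, V = interior (F b)]) V.
    move=> x [a _ Fax]; have [b lab] := no_max a.
    by exists (interior (F b)); [exists b | exact: Fsub Fax].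
  have [D [DC DU] DS] := hL _ Copen Ccov.
  have /choice[gi hgi] : forall V : set X, exists b, [set V | exists b, V = interior (F b)] V -> V = interior (F b).
    move=> V; have [[b e]|nV] := pselect (exists b, V = interior (F b)); first by exists b.
    by exists k0.
  pose T := gi @` D.
  have [a ha] : exists a, forall b, T b -> lt b a.
    apply: contrapT => nex.
    have cof : forall a, exists2 b, T b & ~ lt b a.
      move=> a; apply: contrapT => nb; apply: nex; exists a => b Tb.
      by apply: contrapT => nlt; apply: nb; exists b.
    have /card_eqPle[_ KT] := reg T cof.
    apply: hSK; apply: card_le_trans KT _.
    exact: card_le_trans (card_image_le _ _) DS.
  have UFa : U `<=` F a.
    move=> x /DU [V DV Vx].
    have e := hgi V (DC V DV).
    rewrite e in Vx.
    have lt1 : lt (gi V) a by apply: ha; exists V.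
    exact: interior_subset (Fsub _ _ lt1 x (interior_subset Vx)).
  have [a' laa'] := no_max a.
  have := P3 (Bs a') (Fc a').2.
  apply; right; exists a; split => //.
  apply: UFa; exists a' => //; rewrite FE; exact: P4.
Qed.
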